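(* Let $\beta\in(0,1)$ and $\alpha=\frac{p}{n}\beta$. Suppose (A1) holds, and suppose CLARSTA has run for $K+1$ iterations with $\Delta_k\ge\Delta_{\min}$ for all $k\in\{0,\dots,K\}$. Let $\epsilon>0$. For all $k\in\mathcal{A}_{[0,K]}\cap\mathcal{M}_{[0,K]}$ with $\pi^f(\boldsymbol{x}_k)\ge\epsilon$, we have $$\pi^m(\boldsymbol{x}_k)\ge\epsilon_g(\epsilon),\qquad\text{where }\epsilon_g(\epsilon)=\frac{\alpha\epsilon}{\kappa_{eg}\mu+1}>0.$$
   Context: Problem: minimize $f:\mathbb{R}^n\to\mathbb{R}$ over $\mathcal{C}\subseteq\mathbb{R}^n$, closed convex with nonempty interior. $\|\cdot\|$ Euclidean/spectral norm; $\mathrm{proj}_{\mathcal{C}}$ Euclidean projection; $\sigma_{\min}$ smallest singular value. For $\boldsymbol{x}\in\mathcal{C}$, $\pi^f(\boldsymbol{x})=\left|\min_{\boldsymbol{d}\in\mathcal{C}-\boldsymbol{x},\|\boldsymbol{d}\|\le1}\nabla f(\boldsymbol{x})^\top\boldsymbol{d}\right|$. QR-factorizations have orthonormal-column $\boldsymbol{Q}$. A matrix $\boldsymbol{A}\in\mathbb{R}^{n\times z}$ with QR $\boldsymbol{A}=\boldsymbol{Q}\boldsymbol{R}$ is $\alpha$-well-aligned for $f$ and $\mathcal{C}$ at $\boldsymbol{x}$ if $|\min_{\boldsymbol{d}\in\mathcal{C}-\boldsymbol{x},\|\boldsymbol{d}\|\le1}\nabla f(\boldsymbol{x})^\top\boldsymbol{Q}\boldsymbol{Q}^\top\boldsymbol{d}|\ge\alpha\pi^f(\boldsymbol{x})$.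 Algorithm CLARSTA. Parameters: integers $1\le p_{\mathrm{rand}}\le p\le n$; $\boldsymbol{x}_0\in\mathcal{C}$; $\Delta_0>0$; $0<\Delta_{\min}\le\Delta_{\max}$; $\gamma_{\mathrm{dec}}\in(0,1)$; $\gamma_{\mathrm{inc}}^k\ge1$; $0<\eta_1\le\eta_2<1$; $\mu>0$; $\epsilon_{\mathrm{rad}}\ge1$; $\epsilon_{\mathrm{geo}}>0$. GEN$(q,\Delta,\boldsymbol{Q})$ ($\boldsymbol{Q}$ optional, orthonormal columns): draw $\boldsymbol{A}\in\mathbb{R}^{n\times q}$ with i.i.d. $\mathcal{N}(0,1)$ entries (fresh randomness), of full column rank; $\widetilde{\boldsymbol{A}}=\boldsymbol{A}-\boldsymbol{Q}\boldsymbol{Q}^\top\boldsymbol{A}$ if $\boldsymbol{Q}$ given, else $\boldsymbol{A}$; QR $\widetilde{\boldsymbol{A}}=[\widetilde{\boldsymbol{q}}_1\cdots\widetilde{\boldsymbol{q}}_q]\widetilde{\boldsymbol{R}}$; return $\Delta\widetilde{\boldsymbol{q}}_1,\dots,\Delta\widetilde{\boldsymbol{q}}_q$. REMOVE$(\boldsymbol{D}^U,\Delta,r)$: repeat $r$ times: for $\boldsymbol{D}^U=[\boldsymbol{d}_1\cdots\boldsymbol{d}_m]$ let $\boldsymbol{M}_i$ be $\boldsymbol{D}^U$ without column $i$, $\theta_i=\sigma_{\min}(\boldsymbol{M}_i)\max(\|\boldsymbol{d}_i\|^4/\Delta^4,1)$; delete the column with largest $\theta_i$. Initialization: $\boldsymbol{D}_0$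 = columns GEN$(p,\Delta_0)$. Iteration $k$: QR $\boldsymbol{D}_k=[\boldsymbol{d}_1\cdots\boldsymbol{d}_p]=\boldsymbol{Q}_k\boldsymbol{R}_k$, $\boldsymbol{R}_k=[\boldsymbol{r}_1\cdots\boldsymbol{r}_p]$; $\widehat f_k(\widehat{\boldsymbol{s}})=f(\boldsymbol{x}_k+\boldsymbol{Q}_k\widehat{\boldsymbol{s}})$; $\widehat m_k(\widehat{\boldsymbol{s}})=\widehat f_k(\boldsymbol{0}_p)+\boldsymbol{g}_k^\top\widehat{\boldsymbol{s}}$, $\boldsymbol{g}_k=(\boldsymbol{R}_k^\top)^{-1}\boldsymbol{\delta}_k$, $(\boldsymbol{\delta}_k)_i=\widehat f_k(\boldsymbol{r}_i)-\widehat f_k(\boldsymbol{0}_p)$; $\pi^m(\boldsymbol{x}_k)=\left|\min_{\boldsymbol{d}\in\boldsymbol{Q}_k^\top(\mathcal{C}-\boldsymbol{x}_k),\|\boldsymbol{d}\|\le1}\nabla\widehat m_k(\boldsymbol{0}_p)^\top\boldsymbol{d}\right|$ with $\boldsymbol{Q}_k^\top(\mathcal{C}-\boldsymbol{x}_k)=\{\boldsymbol{Q}_k^\top(\boldsymbol{z}-\boldsymbol{x}_k):\boldsymbol{z}\in\mathcal{C}\}$. If $\Delta_k\le\mu\pi^m(\boldsymbol{x}_k)$ (model accuracy test satisfied): approximately solve $\min\{\widehat m_k(\widehat{\boldsymbol{s}}):\widehat{\boldsymbol{s}}\in\boldsymbol{Q}_k^\top\mathcal{C},\|\widehat{\boldsymbol{s}}\|\le\Delta_k\}$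 giving $\widehat{\boldsymbol{s}}_k$; $\boldsymbol{s}_k=\mathrm{proj}_{\mathcal{C}}(\boldsymbol{x}_k+\boldsymbol{Q}_k\widehat{\boldsymbol{s}}_k)-\boldsymbol{x}_k$; $\rho_k=\frac{f(\boldsymbol{x}_k)-f(\boldsymbol{x}_k+\boldsymbol{s}_k)}{\widehat m_k(\boldsymbol{0}_p)-\widehat m_k(\widehat{\boldsymbol{s}}_k)}$; $\Delta_{k+1}=\gamma_{\mathrm{dec}}\Delta_k$ if $\rho_k<\eta_1$, $\min(\gamma^k_{\mathrm{inc}}\Delta_k,\Delta_{\max})$ if $\rho_k>\eta_2$, $\Delta_k$ otherwise; $\boldsymbol{x}_{k+1}$ any point of $\mathcal{C}$ with $f(\boldsymbol{x}_{k+1})\le\min(\{f(\boldsymbol{x}_k+\boldsymbol{s}_k)\}\cup\{f(\boldsymbol{x}_k+\boldsymbol{d}_i+\boldsymbol{d}_j):\boldsymbol{x}_k+\boldsymbol{d}_i+\boldsymbol{d}_j\in\mathcal{C},\ \boldsymbol{d}_i,\boldsymbol{d}_j\text{ columns of }[\boldsymbol{0}_n\ \boldsymbol{D}_k]\})$; $\boldsymbol{D}^U_{k+1}$: select $p$ linearly independent directions among $\boldsymbol{x}_k+\boldsymbol{s}_k-\boldsymbol{x}_{k+1}$ and $\boldsymbol{x}_k+\boldsymbol{d}_i+\boldsymbol{d}_j-\boldsymbol{x}_{k+1}$, apply REMOVE$(\cdot,\Delta_{k+1},p_{\mathrm{rand}})$, delete columns of norm $>\epsilon_{\mathrm{rad}}\Delta_{k+1}$,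 while nonempty with $\sigma_{\min}<\epsilon_{\mathrm{geo}}$ apply REMOVE$(\cdot,\Delta_{k+1},1)$, optionally remove more; with $p_1$ remaining columns, $\boldsymbol{D}^R_{k+1}$ = GEN$(p-p_1,\Delta_{k+1},$ orthonormal basis of column space of $\boldsymbol{D}^U_{k+1})$, $\boldsymbol{D}_{k+1}=[\boldsymbol{D}^U_{k+1}\ \boldsymbol{D}^R_{k+1}]$. Otherwise: $\Delta_{k+1}=\gamma_{\mathrm{dec}}\Delta_k$, $\boldsymbol{x}_{k+1}=\boldsymbol{x}_k$, $\boldsymbol{D}_{k+1}=\gamma_{\mathrm{dec}}\boldsymbol{D}_k$. Stop if $\Delta_{k+1}<\Delta_{\min}$. (A1): $\nabla f$ exists, is continuous and Lipschitz with constant $L_{\nabla f}$. $M_{\widehat{\boldsymbol{R}}^{-1}}=\max\{1/\epsilon_{\mathrm{geo}},1/\Delta_{\min}\}\epsilon_{\mathrm{rad}}\Delta_{\max}$ and $\kappa_{eg}=\frac12L_{\nabla f}(2+\sqrt{p}M_{\widehat{\boldsymbol{R}}^{-1}})\epsilon_{\mathrm{rad}}$. For $0\le K_1\le K_2\le K$: $\mathcal{A}_{[K_1,K_2]}$ is the set of $k\in\{K_1,\dots,K_2\}$ such that $\boldsymbol{D}_k$ is $\alpha$-well-aligned for $f$ and $\mathcal{C}$ at $\boldsymbol{x}_k$; $\mathcal{M}_{[K_1,K_2]}$ is the set of $k\in\{K_1,\dots,K_2\}$ where the model accuracy test $\Delta_k\le\mu\pi^m(\boldsymbol{x}_k)$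 holds. *)

(* Defs.v *)
From HB Require Import structures.
From mathcomp Require Import all_boot all_order all_algebra.
From mathcomp Require Import all_classical all_reals all_analysis.
Set Implicit Arguments. Unset Strict Implicit. Unset Printing Implicit Defensive.
Import Order.TTheory GRing.Theory Num.Theory.
Import numFieldNormedType.Exports.
Local Open Scope classical_set_scope.
Local Open Scope ring_scope.

Section CLARSTA.
Variables (R : realType) (n : nat).
Notation vec := 'cV[R]_n.

Definition dotv (m : nat) (u v : 'cV[R]_m) : R := (u^T *m v) 0 0.
Definition enorm (m : nat) (v : 'cV[R]_m) : R := Num.sqrt (\sum_i v i 0 ^+ 2).

Definition seqmx (s : seq vec) : 'M[R]_(n, size s) :=
  \matrix_(i < n, j < size s) (nth 0 s j) i 0.
Definition cols (z : nat) (M : 'M[R]_(n, z)) : seq vec :=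
  [seq col i M | i <- enum 'I_z].

(* smallest singular value of an n x z matrix (z <= n in all uses):
   min_{||c|| = 1} ||M c|| *)
Definition sigma_min (z : nat) (M : 'M[R]_(n, z)) : R :=
  inf [set enorm (M *m c) | c in [set c : 'cV[R]_z | enorm c = 1]].
Definition sigma_min_seq (s : seq vec) : R := sigma_min (seqmx s).

Definition upper_tri (z : nat) (Rr : 'M[R]_z) : Prop :=
  forall i j : 'I_z, (j < i)%N -> Rr i j = 0.
Definition isQR (z : nat) (A Q : 'M[R]_(n, z)) (Rr : 'M[R]_z) : Prop :=
  A = Q *m Rr /\ Q^T *m Q = 1%:M /\ upper_tri Rr.

Definition is_proj (C : set vec) (z y : vec) : Prop :=
  C y /\ forall w, C w -> enorm (z - y) <= enorm (z - w).

Definition pif (C : set vec) (g : vec) (x : vec) : R :=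
  `| inf [set dotv g d | d in [set d : vec | C (x + d) /\ enorm d <= 1]] |.

Definition well_aligned (z : nat) (alpha : R) (C : set vec) (g : vec) (x : vec)
    (Q : 'M[R]_(n, z)) : Prop :=
  `| inf [set dotv g (Q *m Q^T *m d) | d in [set d : vec | C (x + d) /\ enorm d <= 1]] |
    >= alpha * pif C g x.

Definition model_grad (p : nat) (f : vec -> R) (x : vec) (Q : 'M[R]_(n, p))
    (Rr : 'M[R]_p) : 'cV[R]_p :=
  invmx Rr^T *m \col_(i < p) (f (x + Q *m col i Rr) - f x).

Definition pim (p : nat) (C : set vec) (x : vec) (Q : 'M[R]_(n, p)) (g : 'cV[R]_p) : R :=
  `| inf [set dotv g d | d in
        [set d : 'cV[R]_p | (exists2 z, C z & d = Q^T *m (z - x)) /\ enorm d <= 1]] |.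

(* GEN(q, Delta, Qb): Qb has orthonormal columns (m = 0 means "no Q given") *)
Definition GEN (q : nat) (Dl : R) (m : nat) (Qb : 'M[R]_(n, m)) (out : seq vec) : Prop :=
  exists (A : 'M[R]_(n, q)) (Qt : 'M[R]_(n, q)) (Rt : 'M[R]_q),
    \rank A = q /\ isQR (A - Qb *m Qb^T *m A) Qt Rt /\ Rt \in unitmx /\
    out = [seq Dl *: col i Qt | i <- enum 'I_q].

Definition rem_nth (i : nat) (s : seq vec) : seq vec := take i s ++ drop i.+1 s.
Definition theta (Dl : R) (s : seq vec) (i : nat) : R :=
  sigma_min_seq (rem_nth i s) * Num.max (enorm (nth 0 s i) ^+ 4 / Dl ^+ 4) 1.
Definition remove_step (Dl : R) (s t : seq vec) : Prop :=
  exists2 i, (i < size s)%N &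
    t = rem_nth i s /\ forall j, (j < size s)%N -> theta Dl s j <= theta Dl s i.
Fixpoint remove_iter (Dl : R) (r : nat) (s t : seq vec) : Prop :=
  match r with
  | O => t = s
  | r'.+1 => exists u, remove_step Dl s u /\ remove_iter Dl r' u t
  end.
Inductive geo_loop (egeo Dl : R) : seq vec -> seq vec -> Prop :=
  | geo_stop s : (s = [::] \/ egeo <= sigma_min_seq s) -> geo_loop egeo Dl s s
  | geo_step s u t : s <> [::] -> sigma_min_seq s < egeo -> remove_step Dl s u ->
      geo_loop egeo Dl u t -> geo_loop egeo Dl s t.

(* columns of [0_n D] *)
Definition colo (p : nat) (D : 'M[R]_(n, p)) (i : option 'I_p) : vec :=
  if i is Some j then col j D else 0.

Definition clarsta_params (p prand : nat) (Delta0 Dmin Dmax gdec : R) (ginc : nat -> R)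
    (eta1 eta2 mu erad egeo : R) : Prop :=
  [/\ (1 <= prand)%N /\ (prand <= p)%N /\ (p <= n)%N,
      0 < Delta0 /\ 0 < Dmin /\ Dmin <= Dmax /\ Delta0 <= Dmax,
      0 < gdec /\ gdec < 1 /\ (forall k, 1 <= ginc k),
      0 < eta1 /\ eta1 <= eta2 /\ eta2 < 1 /\ 0 < mu
    & 1 <= erad /\ 0 < egeo].

Definition clarsta_step (p prand : nat) (f : vec -> R) (C : set vec)
    (Dmax gdec : R) (ginc : nat -> R) (eta1 eta2 mu erad egeo : R) (k : nat)
    (x : nat -> vec) (Delta : nat -> R) (D Q : nat -> 'M[R]_(n, p))
    (Rm : nat -> 'M[R]_p) : Prop :=
  let g := model_grad f (x k) (Q k) (Rm k) in
  if Delta k <= mu * pim C (x k) (Q k) g then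
    exists (shat : 'cV[R]_p) (s : vec) (s0 s1 s3 sU : seq vec) (m : nat)
           (Qb : 'M[R]_(n, m)) (out : seq vec),
      let rho := (f (x k) - f (x k + s)) / (- dotv g shat) in
      [/\ ((exists2 z, C z & shat = (Q k)^T *m z) /\ enorm shat <= Delta k),
          is_proj C (x k + Q k *m shat) (x k + s),
          Delta k.+1 = (if rho < eta1 then gdec * Delta k
                        else if eta2 < rho then Num.min (ginc k * Delta k) Dmax
                        else Delta k),
          [/\ C (x k.+1), f (x k.+1) <= f (x k + s) &
              forall i j, C (x k + colo (D k) i + colo (D k) j) ->
                f (x k.+1) <= f (x k + colo (D k) i + colo (D k) j)]
        & [/\ [/\ size s0 = p, \rank (seqmx s0) = p &
                 forall v, v \in s0 -> v = x k + s - x k.+1 \/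
                   exists i j, v = x k + colo (D k) i + colo (D k) j - x k.+1],
              [/\ remove_iter (Delta k.+1) prand s0 s1,
                 geo_loop egeo (Delta k.+1)
                    [seq v <- s1 | enorm v <= erad * Delta k.+1] s3
               & subseq sU s3],
              Qb^T *m Qb = 1%:M /\ (Qb^T :=: (seqmx sU)^T)%MS,
              GEN (p - size sU) (Delta k.+1) Qb out
            & cols (D k.+1) = sU ++ out]]
  else
    [/\ Delta k.+1 = gdec * Delta k, x k.+1 = x k & D k.+1 = gdec *: D k].

Definition clarsta_run (p prand : nat) (f : vec -> R) (C : set vec)
    (Dmax gdec : R) (ginc : nat -> R) (eta1 eta2 mu erad egeo : R) (K : nat)
    (x : nat -> vec) (Delta : nat -> R) (D Q : nat -> 'M[R]_(n, p))
    (Rm : nat -> 'M[R]_p) : Prop :=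
  [/\ C (x 0),
      GEN p (Delta 0) (0 : 'M[R]_(n, 0)) (cols (D 0)),
      (forall k, (k <= K)%N -> isQR (D k) (Q k) (Rm k))
    & forall k, (k < K)%N ->
        clarsta_step prand f C Dmax gdec ginc eta1 eta2 mu erad egeo k x Delta D Q Rm].

Definition A1 (f : vec -> R) (gradf : vec -> vec) (L : R) : Prop :=
  (forall x, differentiable f x /\ forall v, 'd f x v = dotv (gradf x) v) /\
  continuous gradf /\
  forall x y, enorm (gradf x - gradf y) <= L * enorm (x - y).

Definition M_Rinv (Dmin Dmax erad egeo : R) : R :=
  Num.max (1 / egeo) (1 / Dmin) * erad * Dmax.
Definition kappa_eg (p : nat) (L Dmin Dmax erad egeo : R) : R :=
  L / 2 * (2 + Num.sqrt p%:R * M_Rinv Dmin Dmax erad egeo) * erad.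

End CLARSTA.

(* Main.v *)
Require Import Defs.
From HB Require Import structures.
From mathcomp Require Import all_boot all_order all_algebra.
From mathcomp Require Import all_classical all_reals all_analysis.
From mathcomp Require Import ring lra.
Import Order.TTheory GRing.Theory Num.Theory.
Import numFieldNormedType.Exports.
Local Open Scope classical_set_scope.
Local Open Scope ring_scope.

Set Implicit Arguments. Unset Strict Implicit.
Section Vec.
Variable R : realType.

Definition sq (m : nat) (v : 'cV[R]_m) := dotv v v.

Lemma dotvE m (u v : 'cV[R]_m) : dotv u v = \sum_i u i 0 * v i 0.
Proof. by rewrite /dotv !mxE; apply: eq_bigr => i _; rewrite !mxE. Qed.

Lemma dotvC m (u v : 'cV[R]_m) : dotv u v = dotv v u.
Proof. by rewrite !dotvE; apply: eq_bigr => i _; rewrite mulrC. Qed.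

Lemma dotvDl m (u v w : 'cV[R]_m) : dotv (u + v) w = dotv u w + dotv v w.
Proof. by rewrite /dotv linearD mulmxDl mxE. Qed.

Lemma dotvZl m a (u w : 'cV[R]_m) : dotv (a *: u) w = a * dotv u w.
Proof. by rewrite /dotv linearZ /= -scalemxAl mxE. Qed.

Lemma dotvNl m (u w : 'cV[R]_m) : dotv (- u) w = - dotv u w.
Proof. by rewrite -scaleN1r dotvZl mulN1r. Qed.

Lemma dotvBl m (u v w : 'cV[R]_m) : dotv (u - v) w = dotv u w - dotv v w.
Proof. by rewrite dotvDl dotvNl. Qed.

Lemma dotvDr m (u v w : 'cV[R]_m) : dotv w (u + v) = dotv w u + dotv w v.
Proof. by rewrite dotvC dotvDl !(dotvC w). Qed.
Lemma dotvZr m a (u w : 'cV[R]_m) : dotv w (a *: u) = a * dotv w u.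
Proof. by rewrite dotvC dotvZl dotvC. Qed.
Lemma dotvBr m (u v w : 'cV[R]_m) : dotv w (u - v) = dotv w u - dotv w v.
Proof. by rewrite dotvC dotvBl !(dotvC w). Qed.
Lemma dotv0l m (w : 'cV[R]_m) : dotv 0 w = 0.
Proof. by rewrite -(scale0r 0) dotvZl mul0r. Qed.
Lemma dotv0r m (w : 'cV[R]_m) : dotv w 0 = 0.
Proof. by rewrite dotvC dotv0l. Qed.

Lemma dotv_mul m k (A : 'M[R]_(m, k)) u v : dotv u (A *m v) = dotv (A^T *m u) v.
Proof. by rewrite /dotv trmx_mul trmxK mulmxA. Qed.

Lemma sq_ge0 m (v : 'cV[R]_m) : 0 <= sq v.
Proof. by rewrite /sq dotvE sumr_ge0 // => i _; rewrite -expr2 sqr_ge0. Qed.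

Lemma sq_eq0 m (v : 'cV[R]_m) : sq v = 0 -> v = 0.
Proof.
rewrite /sq dotvE => /eqP; rewrite psumr_eq0; last by move=> i _; rewrite -expr2 sqr_ge0.
move=> /allP H; apply/matrixP => i j; rewrite (ord1 j) mxE.
by have := H i (mem_index_enum i); rewrite -expr2 sqrf_eq0 => /implyP/(_ isT)/eqP.
Qed.

Lemma enorm_sq m (v : 'cV[R]_m) : enorm v = Num.sqrt (sq v).
Proof. by rewrite /enorm /sq dotvE; congr Num.sqrt; apply: eq_bigr => i _; rewrite expr2. Qed.

Lemma enorm_ge0 m (v : 'cV[R]_m) : 0 <= enorm v.
Proof. by rewrite enorm_sq sqrtr_ge0. Qed.

Lemma enorm2 m (v : 'cV[R]_m) : enorm v ^+ 2 = sq v.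
Proof. by rewrite enorm_sq sqr_sqrtr // sq_ge0. Qed.

Lemma sqZ m a (v : 'cV[R]_m) : sq (a *: v) = a ^+ 2 * sq v.
Proof. by rewrite /sq dotvZl dotvZr mulrA expr2. Qed.

Lemma enormZ m a (v : 'cV[R]_m) : enorm (a *: v) = `|a| * enorm v.
Proof. by rewrite !enorm_sq sqZ sqrtrM ?sqr_ge0 // sqrtr_sqr. Qed.

Lemma enormN m (v : 'cV[R]_m) : enorm (- v) = enorm v.
Proof. by rewrite -scaleN1r enormZ normrN normr1 mul1r. Qed.

Lemma sqD m (u v : 'cV[R]_m) : sq (u + v) = sq u + sq v + 2 * dotv u v.
Proof. rewrite /sq dotvDl !dotvDr (dotvC v u); ring. Qed.

Lemma CS m (u v : 'cV[R]_m) : dotv u v <= enorm u * enorm v.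
Proof.
have key : 2 * (enorm u * enorm v) * dotv u v <=
           enorm v ^+ 2 * enorm u ^+ 2 + enorm u ^+ 2 * enorm v ^+ 2.
  rewrite [X in _ <= _ * X + _]enorm2 [X in _ <= _ + _ * X]enorm2.
  move: (enorm u) (enorm v) => A B.
  rewrite /sq !dotvE !mulr_sumr -big_split /=.
  apply: ler_sum => i _.
  set a := u i 0; set b := v i 0.
  have := sqr_ge0 (B * a - A * b); rewrite -subr_ge0.
  by move=> H; rewrite -subr_ge0; apply: le_trans H _; rewrite le_eqVlt; apply/orP; left; apply/eqP; ring.
have [u0|upos] := eqVneq (enorm u) 0.
  have : sq u = 0 by rewrite -enorm2 u0 expr0n.
  rewrite /sq dotvE => /eqP; rewrite psumr_eq0; last by move=> i _; rewrite -expr2 sqr_ge0.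
  move=> /allP H; rewrite u0 mul0r dotvE big1 // => i _.
  have := H i (mem_index_enum i); rewrite -expr2 sqrf_eq0 => /implyP/(_ isT)/eqP ->.
  by rewrite mul0r.
have [v0|vpos] := eqVneq (enorm v) 0.
  have : sq v = 0 by rewrite -enorm2 v0 expr0n.
  rewrite /sq dotvE => /eqP; rewrite psumr_eq0; last by move=> i _; rewrite -expr2 sqr_ge0.
  move=> /allP H; rewrite v0 mulr0 dotvE big1 // => i _.
  have := H i (mem_index_enum i); rewrite -expr2 sqrf_eq0 => /implyP/(_ isT)/eqP ->.
  by rewrite mulr0.
have AB : 0 < enorm u * enorm v.
  by rewrite mulr_gt0 // lt0r ?upos ?vpos ?enorm_ge0.
have : 2 * (enorm u * enorm v) * dotv u v <= 2 * (enorm u * enorm v) * (enorm u * enorm v).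
  apply: le_trans key _; rewrite le_eqVlt; apply/orP; left; apply/eqP; ring.
by rewrite ler_pM2l // mulr_gt0.
Qed.

Lemma CSabs m (u v : 'cV[R]_m) : `|dotv u v| <= enorm u * enorm v.
Proof.
rewrite ler_norml CS andbT lerNl -dotvNl -(enormN u); exact: CS.
Qed.

End Vec.
Set Implicit Arguments. Unset Strict Implicit.
Section LC.
Variables (R : realType) (n : nat).
Notation vec := 'cV[R]_n.

Lemma sqQ k (Q : 'M[R]_(n, k)) c : Q^T *m Q = 1%:M -> sq (Q *m c) = sq c.
Proof. by move=> HQ; rewrite /sq dotv_mul mulmxA HQ mul1mx. Qed.

Lemma enormQT k (Q : 'M[R]_(n, k)) (v : vec) : Q^T *m Q = 1%:M ->
  enorm (Q^T *m v) <= enorm v.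
Proof.
move=> HQ; set u := Q^T *m v.
have H : enorm u ^+ 2 <= enorm u * enorm v.
  rewrite enorm2 /sq {2}/u dotv_mul trmxK.
  by apply: le_trans (CS _ _) _; rewrite [enorm (Q *m u)]enorm_sq sqQ // -enorm_sq.
have [u0|upos] := eqVneq (enorm u) 0; first by rewrite u0 enorm_ge0.
have hu : 0 < enorm u by rewrite lt0r upos enorm_ge0.
by move: H; rewrite expr2 ler_pM2l.
Qed.

Definition lc (cs : seq R) (s : seq vec) : vec := \sum_(i <- zip cs s) i.1 *: i.2.
Definition ssq (cs : seq R) : R := \sum_(c <- cs) c ^+ 2.

Lemma lc_cat cs1 cs2 s1 s2 : size cs1 = size s1 ->
  lc (cs1 ++ cs2) (s1 ++ s2) = lc cs1 s1 + lc cs2 s2.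
Proof. by move=> H; rewrite /lc zip_cat // big_cat. Qed.

Lemma lc_cons c cs y s : lc (c :: cs) (y :: s) = c *: y + lc cs s.
Proof. by rewrite /lc /= big_cons. Qed.

Lemma lc_nil cs : lc cs [::] = 0.
Proof. by case: cs => [|c cs]; rewrite /lc /= big_nil. Qed.

Lemma lc_scale a cs s : lc cs [seq a *: v | v <- s] = a *: lc cs s.
Proof.
elim: s cs => [|y s IH] [|c cs] /=; rewrite ?lc_nil ?scaler0 //.
  by rewrite /lc /= big_nil scaler0.
by rewrite !lc_cons IH scalerDr !scalerA mulrC.
Qed.

Lemma ssq_cat cs1 cs2 : ssq (cs1 ++ cs2) = ssq cs1 + ssq cs2.
Proof. by rewrite /ssq big_cat. Qed.

Lemma ssq_ge0 cs : 0 <= ssq cs.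
Proof. by rewrite /ssq sumr_ge0 // => i _; rewrite sqr_ge0. Qed.

Definition cvec m (c : 'cV[R]_m) : seq R := [seq c i 0 | i <- enum 'I_m].

Lemma size_cvec m (c : 'cV[R]_m) : size (cvec c) = m.
Proof. by rewrite size_map size_enum_ord. Qed.

Lemma Mc_lc m (M : 'M[R]_(n, m)) c : M *m c = lc (cvec c) (cols M).
Proof.
rewrite /lc /cvec /cols zip_map big_map.
apply/matrixP => i j; rewrite (ord1 j) !mxE summxE big_enum /=.
by apply: eq_bigr => k _; rewrite !mxE mulrC.
Qed.

Lemma ssq_cvec m (c : 'cV[R]_m) : ssq (cvec c) = sq c.
Proof.
rewrite /ssq /cvec big_map big_enum /= /sq dotvE.
by apply: eq_bigr => k _; rewrite expr2.
Qed.

Lemma cvec_col m (cs : seq R) : size cs = m -> cvec (\col_(i < m) cs`_i) = cs.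
Proof.
move=> Hs; apply: (@eq_from_nth _ 0); first by rewrite size_cvec.
move=> i; rewrite size_cvec => Hi.
rewrite /cvec (nth_map (Ordinal Hi)) ?size_enum_ord // mxE.
by have /= -> := nth_enum_ord (Ordinal Hi) Hi.
Qed.

Lemma cols_seqmx (s : seq vec) : cols (seqmx s) = s.
Proof.
apply: (@eq_from_nth _ 0); first by rewrite size_map size_enum_ord.
move=> i; rewrite size_map size_enum_ord => Hi.
rewrite /cols (nth_map (Ordinal Hi)) ?size_enum_ord //.
apply/matrixP => a b; rewrite (ord1 b) !mxE.
by have /= -> := nth_enum_ord (Ordinal Hi) Hi.
Qed.

Definition Frs (a : R) (s : seq vec) :=
  forall cs, size cs = size s -> a ^+ 2 * ssq cs <= sq (lc cs s).

Lemma Frs_nil a : Frs a [::].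
Proof. by case=> [|? ?] //= _; rewrite /ssq big_nil mulr0 sq_ge0. Qed.

Lemma Frs_drop a s1 y s2 : Frs a (s1 ++ y :: s2) -> Frs a (s1 ++ s2).
Proof.
move=> H cs Hs.
have Hs1 : size (take (size s1) cs) = size s1.
  by rewrite size_takel // Hs size_cat leq_addr.
have := H (take (size s1) cs ++ 0 :: drop (size s1) cs).
rewrite !size_cat /= size_drop Hs Hs1 size_cat.
rewrite addKn => /(_ erefl).
rewrite !lc_cat // lc_cons scale0r add0r !ssq_cat /ssq big_cons expr0n /= add0r.
by rewrite -lc_cat // cat_take_drop -ssq_cat cat_take_drop.
Qed.

Lemma Frs_subseq a t s : subseq s t -> Frs a t -> Frs a s.
Proof.
suff G : forall pre, subseq s t -> Frs a (pre ++ t) -> Frs a (pre ++ s).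
  by move=> st; have := G [::] st.
elim: t s => [|y t IH] s pre.
  by rewrite subseq0 => /eqP ->.
case: s => [|x s] /=.
  move=> _ H; apply: (IH [::] pre (sub0seq _)); exact: Frs_drop H.
case: eqP => [->|_] st H.
  by rewrite -cat_rcons; apply: IH => //; rewrite cat_rcons.
by apply: IH => //; apply: Frs_drop H.
Qed.

Lemma lc_seqmx (s : seq vec) cs : size cs = size s ->
  lc cs s = seqmx s *m \col_(i < size s) cs`_i.
Proof. by move=> H; rewrite Mc_lc cvec_col // cols_seqmx. Qed.

Lemma Frs_sigma e s : 0 < e -> e <= sigma_min_seq s -> Frs e s.
Proof.
move=> e0 Hs cs Hcs; rewrite lc_seqmx //.
set c := \col_(i < size s) cs`_i.
have -> : ssq cs = sq c by rewrite -ssq_cvec cvec_col.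
have [c0|cn0] := eqVneq (enorm c) 0.
  by rewrite -enorm2 c0 expr0n mulr0 sq_ge0.
have cpos : 0 < enorm c by rewrite lt0r cn0 enorm_ge0.
set u := (enorm c)^-1 *: c.
have u1 : enorm u = 1 by rewrite enormZ ger0_norm ?invr_ge0 ?enorm_ge0 // mulVf.
have : e <= enorm (seqmx s *m u).
  apply: le_trans Hs _; rewrite /sigma_min_seq /sigma_min.
  apply: ge_inf; last by exists u.
  by exists 0 => _ [w _ <-]; rewrite enorm_ge0.
rewrite -scalemxAr enormZ ger0_norm ?invr_ge0 ?enorm_ge0 // ler_pdivlMl //.
move=> H; rewrite -!enorm2 -exprMn; apply: lerXn2r => //.
  by rewrite nnegrE mulr_ge0 ?enorm_ge0 // ltW.
by rewrite nnegrE enorm_ge0.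
by rewrite mulrC.
Qed.

End LC.
Set Implicit Arguments. Unset Strict Implicit.
Section Taylor.
Variables (R : realType) (n : nat).
Notation vec := 'cV[R]_n.

Lemma leR_eq (a b : R) : a = b -> a <= b. Proof. by move->. Qed.

Lemma mvt_quad (phi phi' : R -> R) (g0 k : R) :
  (forall t : R, is_derive t (1 : R) phi (phi' t)) ->
  exists2 c, c \in `]0, 1[%R & phi 1 - phi 0 - g0 - k = phi' c - g0 - 2 * k * c.
Proof.
move=> Hd.
pose psi := phi - (g0 \*: id + k \*: (id ^+ 2)).
pose dpsi := fun t : R => phi' t - (g0 *: (1 : R) + k *: ((2%:R * t ^+ 1) *: (1 : R))).
have Hpsi : forall t : R, is_derive t (1 : R) psi (dpsi t).
  move=> t; rewrite /psi /dpsi.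
  apply: is_deriveB; apply: is_deriveD; apply: is_deriveZ.
have [c c01 Hc] := MVT (ltr01 : (0 : R) < 1) (fun t _ => Hpsi t)
  (derivable_within_continuous (fun t _ => @ex_derive _ _ _ _ _ _ _ (Hpsi t))).
exists c => //; move: Hc.
have E : forall t : R, psi t = phi t - (g0 * t + k * t ^+ 2).
  by move=> t; rewrite /psi !fctE /=.
rewrite !E /dpsi.
have sc : forall x y : R, x *: y = x * y by [].
rewrite !sc !expr1 !expr1n !expr0n /= => H.
have -> : phi 1 - phi 0 - g0 - k = phi 1 - (g0 * 1 + k * 1) - (phi 0 - (g0 * 0 + k * 0)) by ring.
rewrite H; ring.
Qed.

Lemma phi_derive (f : vec -> R) gradf L (HA : A1 f gradf L) (x d : vec) (t : R) :
  is_derive t (1 : R) (fun s : R => f (x + s *: d)) (dotv (gradf (x + t *: d)) d).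
Proof.
have E : (fun h : R => h^-1 *: (((fun s : R => f (x + s *: d)) \o shift t) (h *: (1 : R))
            - f (x + t *: d))) =
         (fun h : R => h^-1 *: ((f \o shift (x + t *: d)) (h *: d) - f (x + t *: d))).
  apply: funext => h /=; congr (_ *: (_ - _)); congr f.
  by rewrite scalerDl [h *: 1]mulr1 addrCA addrC.
have [Hd _] := HA; have [Hdf Hg] := Hd (x + t *: d).
split.
  by rewrite /derivable E; apply: diff_derivable.
by rewrite /derive E -/(derive f (x + t *: d) d) deriveE.
Qed.

Lemma taylor (f : vec -> R) gradf L (HA : A1 f gradf L) (x d : vec) :
  `|f (x + d) - f x - dotv (gradf x) d| <= L / 2 * enorm d ^+ 2.
Proof.
pose phi := fun s : R => f (x + s *: d).
pose phi' := fun t : R => dotv (gradf (x + t *: d)) d.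
have Hd : forall t : R, is_derive t (1 : R) phi (phi' t) by move=> t; exact: phi_derive HA x d t.
have e1 : phi 1 = f (x + d) by rewrite /phi scale1r.
have e0 : phi 0 = f x by rewrite /phi scale0r addr0.
set g0 := dotv (gradf x) d; set N := enorm d ^+ 2.
have B : forall c : R, c \in `]0, 1[%R -> `|phi' c - g0| <= L * c * N.
  move=> c; rewrite in_itv /= => /andP[c0 _]; rewrite /phi' /g0 -dotvBl.
  apply: le_trans (CSabs _ _) _.
  have [_ [_ HL]] := HA.
  apply: le_trans (ler_wpM2r (enorm_ge0 d) (HL _ _)) _.
  rewrite addrC addKr enormZ (ger0_norm (ltW c0)) /N expr2; apply: leR_eq; ring.
have [c1 c1i H1] := mvt_quad g0 (L / 2 * N) Hd.
have [c2 c2i H2] := mvt_quad g0 (- (L / 2 * N)) Hd.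
move: H1 H2; rewrite e1 e0 => H1 H2.
have := B _ c1i; have := B _ c2i; rewrite !ler_norml => /andP[B21 B22] /andP[B11 B12].
apply/andP; split.
  have -> : f (x + d) - f x - g0 = phi' c2 - g0 - 2 * - (L / 2 * N) * c2 - (L / 2 * N).
    by rewrite -H2; ring.
  suff : 0 <= phi' c2 - g0 + L * c2 * N by move=> h; rewrite -subr_ge0; apply: le_trans h _; apply: leR_eq; field.
  by lra.
have -> : f (x + d) - f x - g0 = phi' c1 - g0 - 2 * (L / 2 * N) * c1 + (L / 2 * N).
  by rewrite -H1; ring.
suff : phi' c1 - g0 - L * c1 * N <= 0 by move=> h; rewrite -subr_ge0; apply: le_trans (_ : 0 <= - (phi' c1 - g0 - L * c1 * N)) _; [rewrite oppr_ge0 | apply: leR_eq; field].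
by lra.
Qed.

End Taylor.
Set Implicit Arguments. Unset Strict Implicit.
Section GradErr.
Variables (R : realType) (n : nat).
Notation vec := 'cV[R]_n.

Lemma colM k p (A : 'M[R]_(n, k)) (B : 'M[R]_(k, p)) i : col i (A *m B) = A *m col i B.
Proof. by apply/matrixP => a b; rewrite !mxE; apply: eq_bigr => j _; rewrite !mxE. Qed.

Lemma trmx_entry p (A : 'M[R]_(n, p)) (v : vec) i : (A^T *m v) i 0 = dotv (col i A) v.
Proof. by rewrite dotvE mxE; apply: eq_bigr => j _; rewrite !mxE. Qed.

Lemma sq_le_enorm m (u v : 'cV[R]_m) a : 0 <= a -> a ^+ 2 * sq u <= sq v -> a * enorm u <= enorm v.
Proof.
move=> a0 H; rewrite -(ler_pXn2r (n := 2)) // ?nnegrE ?mulr_ge0 ?enorm_ge0 //.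
by rewrite exprMn !enorm2.
Qed.

Lemma unit_of_frame p (D Q : 'M[R]_(n, p)) (Rr : 'M[R]_p) a :
  0 < a -> isQR D Q Rr -> (forall c, a ^+ 2 * sq c <= sq (D *m c)) -> Rr \in unitmx.
Proof.
move=> a0 [HD [HQ _]] Hf.
rewrite -unitmx_tr -row_free_unit -kermx_eq0; apply/negPn/negP => /matrix0Pn [i [j Hij]].
set u := row i (kermx Rr^T).
have u0 : u *m Rr^T = 0 by rewrite /u -row_mul mulmx_ker row0.
have Hc : D *m u^T = 0 by rewrite HD -mulmxA -[Rr]trmxK -trmx_mul u0 trmx0 mulmx0.
have := Hf u^T; rewrite Hc /sq dotv0l => H.
have : sq u^T = 0.
  apply/eqP; rewrite eq_le sq_ge0 andbT.
  by rewrite -(pmulr_rle0 _ (exprn_gt0 2 a0)).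
move/sq_eq0 => E; have := congr1 (fun M : 'cV[R]_p => M j 0) E.
have -> : (u^T) j 0 = kermx Rr^T i j by rewrite !mxE.
by rewrite /= => E'; move: Hij; rewrite E' mxE eqxx.
Qed.

Lemma grad_err (f : vec -> R) gradf L (HA : A1 f gradf L) (L0 : 0 <= L)
  (x : vec) p (D Q : 'M[R]_(n, p)) (Rr : 'M[R]_p) a B :
  0 < a -> isQR D Q Rr -> (forall c, a ^+ 2 * sq c <= sq (D *m c)) ->
  (forall j, enorm (col j D) <= B) ->
  enorm (model_grad f x Q Rr - Q^T *m gradf x) <= Num.sqrt p%:R * (L / 2 * B ^+ 2) / a.
Proof.
move=> a0 HQR Hf HB.
have Ru := unit_of_frame a0 HQR Hf.
move: HQR => [HD [HQ _]].
have RTu : Rr^T \in unitmx by rewrite unitmx_tr.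
set y := model_grad f x Q Rr - Q^T *m gradf x.
set e := Rr^T *m y.
have He : forall i, `|e i 0| <= L / 2 * B ^+ 2.
  move=> i; rewrite /e /y /model_grad mulmxBr (mulKVmx RTu) mulmxA -trmx_mul -HD.
  rewrite [X in `|X|]mxE [(\col__ _) i 0]mxE [X in _ + X]mxE trmx_entry -colM -HD dotvC.
  apply: le_trans (taylor HA _ _) _.
  apply: ler_wpM2l; first by rewrite mulr_ge0 // invr_ge0.
  by rewrite ler_sqr ?nnegrE ?enorm_ge0 ?(le_trans (enorm_ge0 _) (HB i)).
have B0 : 0 <= L / 2 * B ^+ 2 by rewrite mulr_ge0 ?sqr_ge0 // mulr_ge0 // invr_ge0.
have Hen : enorm e <= Num.sqrt p%:R * (L / 2 * B ^+ 2).
  rewrite -(ger0_norm B0) -sqrtr_sqr -sqrtrM // enorm_sq ler_sqrt.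
    rewrite /sq dotvE.
    apply: le_trans (_ : \sum_(i < p) (L / 2 * B ^+ 2) ^+ 2 <= _).
      apply: ler_sum => i _; rewrite -expr2 -[X in X <= _]ger0_norm ?sqr_ge0 // normrX.
      by apply: lerXn2r; rewrite ?nnegrE // (le_trans _ (He i)).
    by rewrite sumr_const cardT size_enum_ord mulr_natl.
  by rewrite mulr_ge0 ?sqr_ge0.
set w := invmx Rr *m y.
have Rw : Rr *m w = y by rewrite /w (mulKVmx Ru).
have Hw : a * enorm w <= enorm y.
  apply: sq_le_enorm; first exact: ltW.
  by apply: le_trans (Hf w) _; rewrite HD -mulmxA Rw sqQ.
have Hy : enorm y ^+ 2 <= enorm e * enorm w.
  by rewrite enorm2 /sq -{2}Rw dotv_mul; exact: CS.
have [y0|yn0] := eqVneq (enorm y) 0.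
  by rewrite y0 divr_ge0 ?(ltW a0) // mulr_ge0 ?sqrtr_ge0.
have ypos : 0 < enorm y by rewrite lt0r yn0 enorm_ge0.
rewrite ler_pdivlMr //.
apply: le_trans (_ : enorm e <= _); last exact: Hen.
have : a * enorm y ^+ 2 <= enorm e * enorm y.
  apply: le_trans (ler_wpM2l (ltW a0) Hy) _.
  rewrite mulrCA; apply: ler_wpM2l; first exact: enorm_ge0.
  exact: Hw.
by rewrite expr2 mulrA [a * _]mulrC ler_pM2r.
Qed.

End GradErr.
Set Implicit Arguments. Unset Strict Implicit.
Section Geo.
Variables (R : realType) (n : nat).
Notation vec := 'cV[R]_n.

Lemma rem_nth_subseq i (s : seq vec) : subseq (rem_nth i s) s.
Proof.
have H : subseq (drop i.+1 s) (drop i s).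
  by rewrite (_ : drop i.+1 s = drop 1 (drop i s)) ?drop_subseq // drop_drop add1n.
by have := cat_subseq (subseq_refl (take i s)) H; rewrite cat_take_drop.
Qed.

Lemma geo_prop egeo Dl (s t : seq vec) : geo_loop egeo Dl s t ->
  subseq t s /\ (t = [::] \/ egeo <= sigma_min_seq t).
Proof.
elim=> [s0 H|s0 u t0 _ _ [i _ [-> _]] _ [IH1 IH2]]; first by split.
split => //; apply: subseq_trans IH1 (rem_nth_subseq _ _).
Qed.

Lemma col_in_cols p (M : 'M[R]_(n, p)) j : col j M \in cols M.
Proof. by apply: map_f; rewrite mem_enum. Qed.

Lemma out_eq q (Dl : R) (Qt : 'M[R]_(n, q)) :
  [seq Dl *: col i Qt | i <- enum 'I_q] = [seq Dl *: v | v <- cols Qt].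
Proof. by rewrite /cols; elim: (enum 'I_q) => //= i s ->. Qed.

Lemma sq_col_orth q (Qt : 'M[R]_(n, q)) i : Qt^T *m Qt = 1%:M -> enorm (col i Qt) = 1.
Proof.
move=> HQ; rewrite enorm_sq /sq -trmx_entry -colM HQ !mxE eqxx /=.
by rewrite sqrtr1.
Qed.

Lemma lc_orth cs (s : seq vec) (w : vec) : (forall v, v \in s -> dotv v w = 0) ->
  dotv (lc cs s) w = 0.
Proof.
elim: s cs => [|y s IH] [|c cs] H; rewrite ?lc_nil ?dotv0l //.
  by rewrite /lc /= big_nil dotv0l.
rewrite lc_cons dotvDl dotvZl H ?mem_head // mulr0 add0r IH // => v hv.
by apply: H; rewrite in_cons hv orbT.
Qed.

End Geo.
Set Implicit Arguments. Unset Strict Implicit.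
Section Succ.
Variables (R : realType) (n : nat).
Notation vec := 'cV[R]_n.

Lemma succ_frame p (D' : 'M[R]_(n, p)) (sU out s3 : seq vec) (m q : nat)
  (Qb : 'M[R]_(n, m)) (Dl egeo erad : R) :
  0 < egeo -> 0 <= Dl -> 1 <= erad ->
  (s3 = [::] \/ egeo <= sigma_min_seq s3) -> subseq sU s3 ->
  (forall v, v \in sU -> enorm v <= erad * Dl) ->
  Qb^T *m Qb = 1%:M -> (Qb^T :=: (seqmx sU)^T)%MS ->
  GEN q Dl Qb out -> cols D' = sU ++ out ->
  (forall c, (Num.min egeo Dl) ^+ 2 * sq c <= sq (D' *m c)) /\
  (forall j, enorm (col j D') <= erad * Dl).
Proof.
move=> eg0 Dl0 er1 H3 HsU HnU HQb Hsp [A [Qt [Rt [_ [[HA [HQt _]] [HRt Hout]]]]]] Hcols.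
rewrite out_eq in Hout.
have Hsize : (size sU + q)%N = p.
  have := congr1 size Hcols; rewrite /cols size_cat Hout !size_map. rewrite -!enumT !size_enum_ord.
  by move=> <-.
have QbQt : Qb^T *m Qt = 0.
  have -> : Qt = (A - Qb *m Qb^T *m A) *m invmx Rt by rewrite HA mulmxK.
  by rewrite mulmxA mulmxBr !mulmxA HQb mul1mx subrr mul0mx.
have orth : forall v, v \in sU -> Qt^T *m v = 0.
  move=> v; rewrite -{1}(cols_seqmx sU) => /mapP [j _ ->].
  move/eqmxP: Hsp => /andP [_ /submxP [W HW]].
  have -> : seqmx sU = Qb *m W^T by rewrite -[seqmx sU]trmxK HW trmx_mul trmxK.
  by rewrite colM mulmxA -[Qt^T *m Qb]trmxK trmx_mul trmxK QbQt trmx0 mul0mx.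
have FsU : Frs egeo sU.
  apply: Frs_subseq HsU _; case: H3 => [->|]; [exact: Frs_nil | exact: Frs_sigma].
split.
  move=> c; rewrite -ssq_cvec Mc_lc Hcols.
  set cs := cvec c.
  have Hcs : size cs = p by rewrite size_cvec.
  have Hcs1 : size (take (size sU) cs) = size sU by rewrite size_takel // Hcs -Hsize leq_addr.
  have Hcs2 : size (drop (size sU) cs) = q by rewrite size_drop Hcs -Hsize addKn.
  rewrite -(cat_take_drop (size sU) cs) lc_cat // Hout lc_scale.
  rewrite -(cvec_col Hcs2) -Mc_lc.
  set c2 := \col_(i < q) _.
  rewrite sqD sqZ sqQ // ssq_cat.
  have -> : dotv (lc (take (size sU) cs) sU) (Dl *: (Qt *m c2)) = 0.
    apply: lc_orth => v hv; rewrite dotvZr dotv_mul orth // dotv0l mulr0 //.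
  have h2 : sq c2 = ssq (drop (size sU) cs) by rewrite -ssq_cvec cvec_col.
  have h1 := FsU _ Hcs1.
  set s1 := ssq (take (size sU) cs) in h1 *; set s2 := ssq (drop (size sU) cs) in h2 *.
  have s10 : 0 <= s1 by exact: ssq_ge0.
  have s20 : 0 <= s2 by exact: ssq_ge0.
  set mn := Num.min egeo Dl.
  have mn0 : 0 <= mn by rewrite /mn le_min (ltW eg0) Dl0.
  have m1 : mn ^+ 2 <= egeo ^+ 2 by rewrite ler_sqr ?nnegrE ?(ltW eg0) // /mn ge_min lexx.
  have m2 : mn ^+ 2 <= Dl ^+ 2 by rewrite ler_sqr ?nnegrE // /mn ge_min lexx orbT.
  have k1 := ler_wpM2r s10 m1.
  have k2 := ler_wpM2r s20 m2.
  rewrite ssq_cvec h2 mulrDr; lra.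
move=> j; have := col_in_cols D' j; rewrite Hcols mem_cat => /orP [/HnU //|].
rewrite Hout => /mapP [w /mapP [i _ ->] ->].
rewrite enormZ ger0_norm // sq_col_orth // mulr1.
by rewrite -[X in X <= _]mul1r ler_wpM2r.
Qed.

End Succ.
Set Implicit Arguments. Unset Strict Implicit.
Section Pim.
Variables (R : realType) (n : nat).
Notation vec := 'cV[R]_n.

Lemma enorm0 m : enorm (0 : 'cV[R]_m) = 0.
Proof. by rewrite enorm_sq /sq dotv0l sqrtr0. Qed.

Lemma pim_bound p (C : set vec) (x : vec) (Q : 'M[R]_(n, p)) g (gx : vec) :
  C x -> Q^T *m Q = 1%:M ->
  `|inf [set dotv gx (Q *m Q^T *m d) | d in [set d : vec | C (x + d) /\ enorm d <= 1]]|
    - enorm (g - Q^T *m gx) <= pim C x Q g.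
Proof.
move=> Cx HQ.
set SW := [set dotv gx (Q *m Q^T *m d) | d in _].
set S := [set dotv g d | d in [set d : 'cV[R]_p | (exists2 z, C z & d = Q^T *m (z - x)) /\ enorm d <= 1]].
set r := enorm (g - Q^T *m gx).
have SW0 : SW 0.
  exists 0; last by rewrite mulmx0 dotv0r.
  by rewrite /= addr0 enorm0; split.
have SWlb : has_lbound SW.
  exists (- enorm gx) => _ [d [_ Hd] <-].
  rewrite lerNl -dotvNl; apply: le_trans (CS _ _) _; rewrite enormN.
  rewrite -[X in _ <= X]mulr1; apply: ler_wpM2l; first exact: enorm_ge0.
  rewrite -mulmxA enorm_sq sqQ // -enorm_sq.
  exact: le_trans (enormQT _ HQ) Hd.
have Slb : has_lbound S.
  exists (- enorm g) => _ [d [_ Hd] <-].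
  rewrite lerNl -dotvNl; apply: le_trans (CS _ _) _; rewrite enormN.
  rewrite -[X in _ <= X]mulr1; apply: ler_wpM2l => //; exact: enorm_ge0.
have infSW0 : inf SW <= 0 by apply: ge_inf.
have key : inf S - r <= inf SW.
  apply: lb_le_inf; first by exists 0.
  move=> _ [d [Cd Hd] <-].
  set d' := Q^T *m d.
  have Sd' : S (dotv g d').
    exists d' => //; split; last exact: le_trans (enormQT _ HQ) Hd.
    by exists (x + d) => //; rewrite /d' addrC addKr.
  have := ge_inf Slb Sd'.
  have -> : dotv g d' = dotv (Q^T *m gx) d' + dotv (g - Q^T *m gx) d'.
    by rewrite -dotvDl addrC subrK.
  rewrite -dotv_mul -mulmxA -/d' => H.
  have : dotv (g - Q^T *m gx) d' <= r.
    apply: le_trans (CS _ _) _; rewrite -[X in _ <= X]mulr1.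
    apply: ler_wpM2l; first exact: enorm_ge0.
    exact: le_trans (enormQT _ HQ) Hd.
  lra.
rewrite /pim -/S (ler0_norm infSW0).
have : - inf S <= `|inf S| by rewrite -normrN ler_norm.
lra.
Qed.

End Pim.
Set Implicit Arguments. Unset Strict Implicit.
Section Aux.
Variables (R : realType).

Lemma c0_le (egeo Dmax Dl : R) : 0 < egeo -> 0 < Dl -> Dl <= Dmax ->
  0 <= Num.min (egeo / Dmax) 1 * Dl /\
  Num.min (egeo / Dmax) 1 * Dl <= Num.min egeo Dl.
Proof.
move=> e0 D0 DD.
have Dm0 : 0 < Dmax by apply: lt_le_trans DD.
have c00 : 0 <= Num.min (egeo / Dmax) 1 by rewrite le_min ler01 divr_ge0 ?ltW.
split; first by rewrite mulr_ge0 // ltW.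
rewrite le_min; apply/andP; split.
  apply: le_trans (_ : egeo / Dmax * Dl <= _).
    by apply: ler_wpM2r; [exact: ltW | rewrite ge_min lexx].
  by rewrite mulrAC ler_pdivrMr // ler_wpM2l // ltW.
rewrite -[X in _ <= X]mul1r; apply: ler_wpM2r; [exact: ltW | rewrite ge_min lexx orbT]. done.
Qed.

Lemma c0_M (egeo Dmax Dmin : R) : 0 < egeo -> 0 < Dmin -> Dmin <= Dmax ->
  1 <= Num.min (egeo / Dmax) 1 * (Num.max (1 / egeo) (1 / Dmin) * Dmax).
Proof.
move=> e0 m0 mM.
have M0 : 0 < Dmax by apply: lt_le_trans mM.
have [h|h] := leP (egeo / Dmax) 1.
  have -> : egeo / Dmax * (Num.max (1 / egeo) (1 / Dmin) * Dmax) =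
            egeo * Num.max (1 / egeo) (1 / Dmin).
    by field; rewrite gt_eqF.
  apply: le_trans (_ : egeo * (1 / egeo) <= _).
    by rewrite div1r mulfV ?gt_eqF.
  by rewrite ler_pM2l // le_max lexx.
idtac.
apply: le_trans (_ : 1 / Dmin * Dmax <= _).
  by rewrite mul1r ler_pdivlMl // mulr1.
by rewrite [X in _ <= X]mul1r ler_pM2r // le_max lexx orbT.
Qed.

End Aux.
Unset Implicit Arguments.
Theorem mainTheorem11 (R : realType) (n p prand : nat)
  (f : 'cV[R]_n -> R) (gradf : 'cV[R]_n -> 'cV[R]_n) (L : R) (C : set 'cV[R]_n)
  (Dmin Dmax gdec : R) (ginc : nat -> R) (eta1 eta2 mu erad egeo : R)
  (K : nat) (x : nat -> 'cV[R]_n) (Delta : nat -> R)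
  (D Q : nat -> 'M[R]_(n, p)) (Rm : nat -> 'M[R]_p) (beta eps : R) :
  (* C closed convex with nonempty interior *)
  closed C -> convex_set C -> (exists z, (interior C) z) ->
  clarsta_params n p prand (Delta 0) Dmin Dmax gdec ginc eta1 eta2 mu erad egeo ->
  A1 f gradf L ->
  clarsta_run prand f C Dmax gdec ginc eta1 eta2 mu erad egeo K x Delta D Q Rm ->
  (forall k, (k <= K)%N -> Dmin <= Delta k) ->
  0 < beta -> beta < 1 -> 0 < eps ->
  let alpha := p%:R / n%:R * beta in
  let eps_g := alpha * eps / (kappa_eg p L Dmin Dmax erad egeo * mu + 1) in
  0 < eps_g /\
  forall k, (k <= K)%N ->
    well_aligned alpha C (gradf (x k)) (x k) (Q k) ->
    Delta k <= mu * pim C (x k) (Q k) (model_grad f (x k) (Q k) (Rm k)) ->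
    eps <= pif C (gradf (x k)) (x k) ->
    eps_g <= pim C (x k) (Q k) (model_grad f (x k) (Q k) (Rm k)).
Proof.
move=> clC cvC intC [[pr1 [prp pn]] [D00 [Dmin0 [DmM D0M]]] [gd0 [gd1 ginc1]]
  [et10 [et12 [et21 mu0]]] [er1 eg0]] HA [Cx0 HG0 HQR Hstep] HDmin b0 b1 e0 alpha eps_g.
have p0 : (0 < p)%N by apply: leq_trans pr1 prp.
have n0 : (0 < n)%N by apply: leq_trans p0 pn.
have DM0 : 0 < Dmax by apply: lt_le_trans Dmin0 DmM.
have L0 : 0 <= L.
  have [_ [_ HL]] := HA.
  set e : 'cV[R]_n := const_mx 1.
  have he : 0 < enorm (0 - e).
    rewrite sub0r enormN enorm_sq sqrtr_gt0 /sq dotvE.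
    rewrite (eq_bigr (fun _ => 1)) => [|i _]; last by rewrite mxE mulr1.
    by rewrite sumr_const card_ord ltr0n.
  by have := le_trans (enorm_ge0 _) (HL 0 e); rewrite pmulr_lge0.
set c0 := Num.min (egeo / Dmax) 1.
have c0pos : 0 < c0 by rewrite /c0 lt_min ltr01 divr_gt0.
set kap := kappa_eg p L Dmin Dmax erad egeo.
set Mx := Num.max (1 / egeo) (1 / Dmin).
have Mx0 : 0 <= Mx by rewrite /Mx le_max; apply/orP; left; rewrite divr_ge0 // ?ler01 // ltW.
have sp0 : 0 <= Num.sqrt (p%:R : R) by apply: sqrtr_ge0.
have er0 : 0 <= erad by apply: le_trans er1; exact: ler01.
have kap0 : 0 <= kap.
  rewrite /kap /kappa_eg /M_Rinv -/Mx.
  have h : 0 <= 2 + Num.sqrt (p%:R : R) * (Mx * erad * Dmax).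
    by rewrite addr_ge0 // mulr_ge0 // mulr_ge0 // ?mulr_ge0 // ltW.
  apply: mulr_ge0 => //; apply: mulr_ge0 => //; apply: mulr_ge0 => //.
have alpha0 : 0 < alpha by rewrite /alpha !mulr_gt0 ?invr_gt0 ?ltr0n.
have kmu : 0 <= kap * mu by rewrite mulr_ge0 // (ltW mu0).
split.
  apply: divr_gt0; [exact: mulr_gt0 | rewrite -/kap; lra].
have conv : forall (Dl : R) (Dm : 'M[R]_(n, p)), 0 < Dl -> Dl <= Dmax ->
    (forall c, (Num.min egeo Dl) ^+ 2 * sq c <= sq (Dm *m c)) ->
    (forall c, (c0 * Dl) ^+ 2 * sq c <= sq (Dm *m c)).
  move=> Dl Dm Dl0 DlM H c; apply: le_trans (H c).
  have [h0 h1] := c0_le eg0 Dl0 DlM.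
  apply: ler_wpM2r; first exact: sq_ge0.
  by rewrite ler_sqr // nnegrE le_min (ltW eg0) ltW.
have Inv : forall k, (k <= K)%N -> [/\ C (x k), Delta k <= Dmax,
    (forall c, (c0 * Delta k) ^+ 2 * sq c <= sq (D k *m c)) &
    (forall j, enorm (col j (D k)) <= erad * Delta k)].
  elim=> [_|k IH Hk].
    have Dp : 0 < Delta 0 by apply: lt_le_trans Dmin0 (HDmin 0%N isT).
    have E : (seqmx ([::] : seq 'cV[R]_n))^T = (0 : 'M[R]_(n, 0))^T.
      by apply/matrixP => -[i hi]; exfalso; rewrite ltn0 in hi.
    have H0 : (0 : 'M[R]_(n, 0))^T *m 0 = 1%:M.
      by apply/matrixP => -[i hi]; exfalso; rewrite ltn0 in hi.
    have H1 : ((0 : 'M[R]_(n, 0))^T :=: (seqmx ([::] : seq 'cV[R]_n))^T)%MS.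
      by rewrite E; exact: eqmx_refl.
    have [F1 F2] := @succ_frame R n p (D 0) [::] (cols (D 0)) [::] 0%N p 0 (Delta 0) egeo erad
      eg0 (ltW Dp) er1 (or_introl erefl) (sub0seq _) (fun v (hv : v \in [::]) => False_ind _ (notF hv))
      H0 H1 HG0 erefl.
    split => //; exact: conv.
  have Hk' : (k < K)%N := Hk.
  have [Cxk DkM Frk Colk] := IH (ltnW Hk).
  have Dp : 0 < Delta k by apply: lt_le_trans Dmin0 (HDmin k (ltnW Hk)).
  have Dp1 : 0 < Delta k.+1 by apply: lt_le_trans Dmin0 (HDmin k.+1 Hk).
  move: (Hstep k Hk'); rewrite /clarsta_step; case: ifP => _.
    move=> [shat [s [s0 [s1 [s3 [sU [m [Qb [out H]]]]]]]]].
    move: H => /= [_ _ HDel [Cx1 _ _] [_ [_ Hgeo HsU] [HQb Hsp] HGEN Hcols]].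
    have D1M : Delta k.+1 <= Dmax.
      move: HDel; case: ifP => _ ->.
        by apply: le_trans _ DkM; rewrite ler_piMl // ltW.
      case: ifP => _ //; by rewrite ge_min lexx orbT.
    have [sub3 H3] := geo_prop Hgeo.
    have HnU : forall v, v \in sU -> enorm v <= erad * Delta k.+1.
      move=> v hv; have := mem_subseq sub3 (mem_subseq HsU hv).
      by rewrite mem_filter => /andP [].
    have [F1 F2] := succ_frame eg0 (ltW Dp1) er1 H3 HsU HnU HQb Hsp HGEN Hcols.
    split => //; exact: conv.
  move=> [HD1 Hx1 HD1']; rewrite Hx1 HD1' HD1; split => //.
  - by apply: le_trans _ DkM; rewrite ler_piMl // ltW.
  - move=> c; rewrite -scalemxAl sqZ.
    have -> : (c0 * (gdec * Delta k)) ^+ 2 * sq c = gdec ^+ 2 * ((c0 * Delta k) ^+ 2 * sq c).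
      by ring.
    by apply: ler_wpM2l; [exact: sqr_ge0 | exact: Frk].
  - move=> j.
    have -> : col j (gdec *: D k) = gdec *: col j (D k) by apply/matrixP => a b; rewrite !mxE.
    rewrite enormZ (ger0_norm (ltW gd0)) mulrCA.
    by apply: ler_wpM2l; [exact: ltW | exact: Colk].
move=> k Hk WA MT Heps.
have [Cxk DkM Frk Colk] := Inv k Hk.
have Dp : 0 < Delta k by apply: lt_le_trans Dmin0 (HDmin k Hk).
have apos : 0 < c0 * Delta k by rewrite mulr_gt0.
have Herr := grad_err HA L0 (x k) apos (HQR k Hk) Frk Colk.
have [_ [HQk _]] := HQR k Hk.
have Hpim := pim_bound (model_grad f (x k) (Q k) (Rm k)) (gradf (x k)) Cxk HQk.
move: WA; rewrite /well_aligned => WA.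
set g := model_grad f (x k) (Q k) (Rm k) in Herr Hpim MT *.
set err := enorm (g - (Q k)^T *m gradf (x k)) in Herr Hpim.
set P := pim C (x k) (Q k) g in Hpim MT *.
set W := `|inf _| in WA Hpim.
set pf := pif C (gradf (x k)) (x k) in WA Heps.
have Hae : alpha * eps <= alpha * pf by rewrite ler_pM2l.
have Herr2 : err <= kap * Delta k.
  apply: le_trans Herr _.
  rewrite ler_pdivrMr //.
  set A := L / 2 * Num.sqrt (p%:R : R) * erad ^+ 2 * Delta k ^+ 2.
  have A0 : 0 <= A.
    rewrite /A; apply: mulr_ge0; last exact: sqr_ge0.
    apply: mulr_ge0; last exact: sqr_ge0.
    by apply: mulr_ge0 => //; apply: mulr_ge0; rewrite ?invr_ge0 ?ler0n.
  have E1 : kap * Delta k * (c0 * Delta k) =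
      L / 2 * 2 * erad * Delta k * (c0 * Delta k) + A * (c0 * (Mx * Dmax)).
    by rewrite /kap /kappa_eg /M_Rinv -/Mx /A; ring.
  have E2 : Num.sqrt (p%:R : R) * (L / 2 * (erad * Delta k) ^+ 2) = A.
    by rewrite /A; ring.
  have T1 : 0 <= L / 2 * 2 * erad * Delta k * (c0 * Delta k).
    rewrite !mulr_ge0 // ?invr_ge0 ?ler0n //; exact: ltW.
  have T2 : A <= A * (c0 * (Mx * Dmax)).
    by rewrite ler_peMr // c0_M.
  rewrite E1 E2; lra.
have Hkm : kap * Delta k <= kap * (mu * P) by rewrite ler_wpM2l.
rewrite /eps_g -/kap ler_pdivrMr; last by lra.
lra.
Qed.
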